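(* Let $\Psi$ be a reconstructor, let $\delta_1,\delta_2\ge0$ with corresponding data $y^{\delta_1},y^{\delta_2}\in\mathbb{R}^m$, and let $x\in\mathcal{X}$. Then $$\mathcal{J}_{\Psi,\delta_1}(x)\le 2\mathcal{J}_{\Psi,\delta_2}(x)+2\|y^{\delta_1}-y^{\delta_2}\|_2^2+\lambda\,\|w(\Psi(y^{\delta_1}))-w(\Psi(y^{\delta_2}))\|_1\,\|\,|Dx|\,\|_1,$$ where $\mathcal{J}_{\Psi,\delta}(x)=\|Kx-y^\delta\|_2^2+\lambda\|w(\Psi(y^\delta))\odot|Dx|\|_1$.
   Context: Let $K\in\mathbb{R}^{m\times n}$, and let $D_h,D_v\in\mathbb{R}^{n\times n}$ be the discrete horizontal and vertical difference operators; $|Dx|\in\mathbb{R}^n$, $(|Dx|)_i=\sqrt{(D_hx)_i^2+(D_vx)_i^2}$. $\mathcal{X}=\{x\in\mathbb{R}^n: x_i\ge 0\ \forall i\}$. Fix $\lambda>0$, $\eta>0$, $p\in(0,1)$, and for $\tilde x\in\mathbb{R}^n$ define $(w(\tilde{x}))_i=\big(\eta/\sqrt{\eta^2+(|D\tilde{x}|)_i^2}\big)^{1-p}$. A reconstructor is a Lipschitz continuous map $\Psi:\mathbb{R}^m\to\mathbb{R}^n$. For $\delta\ge0$, $y^\delta=Kx^{GT}+e$ with $x^{GT}\in\mathcal{X}$ and $\|e\|_2\le\delta$. $\odot$ is the entrywise product. *)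

(* Defs.v *)
From HB Require Import structures.
From mathcomp Require Import all_boot all_order all_algebra.
From mathcomp Require Import all_classical all_reals all_analysis.
Set Implicit Arguments. Unset Strict Implicit. Unset Printing Implicit Defensive.
Import Order.TTheory GRing.Theory Num.Theory.
Local Open Scope ring_scope.

Section Defs.
Variable R : realType.

Definition norm2 k (v : 'cV[R]_k) : R := Num.sqrt (\sum_i v i 0 ^+ 2).

Definition norm1 k (v : 'cV[R]_k) : R := \sum_i `|v i 0|.

Definition hadamard k (a b : 'cV[R]_k) : 'cV[R]_k := \col_i (a i 0 * b i 0).

Definition absD n (Dh Dv : 'M[R]_n) (x : 'cV[R]_n) : 'cV[R]_n :=
  \col_i Num.sqrt ((Dh *m x) i 0 ^+ 2 + (Dv *m x) i 0 ^+ 2).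

Definition weight n (Dh Dv : 'M[R]_n) (eta p : R) (xt : 'cV[R]_n) : 'cV[R]_n :=
  \col_i ((eta / Num.sqrt (eta ^+ 2 + absD Dh Dv xt i 0 ^+ 2)) `^ (1 - p)).

(* the feasible set X = nonnegative vectors *)
Definition nonneg n (x : 'cV[R]_n) : Prop := forall i, 0 <= x i 0.

(* reconstructor: Lipschitz continuous map R^m -> R^n *)
Definition Lipschitz2 m n (Psi : 'cV[R]_m -> 'cV[R]_n) : Prop :=
  exists L : R, forall y1 y2, norm2 (Psi y1 - Psi y2) <= L * norm2 (y1 - y2).

Definition Jfun m n (K : 'M[R]_(m, n)) (Dh Dv : 'M[R]_n) (lambda eta p : R)
  (Psi : 'cV[R]_m -> 'cV[R]_n) (y : 'cV[R]_m) (x : 'cV[R]_n) : R :=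
  norm2 (K *m x - y) ^+ 2
  + lambda * norm1 (hadamard (weight Dh Dv eta p (Psi y)) (absD Dh Dv x)).

End Defs.

(* Main.v *)
Require Import Defs.
From HB Require Import structures.
From mathcomp Require Import all_boot all_order all_algebra.
From mathcomp Require Import all_classical all_reals all_analysis.
From mathcomp Require Import ring lra.
Import Order.TTheory GRing.Theory Num.Theory.
Local Open Scope ring_scope.

Lemma norm2_sq (R : realType) k (v : 'cV[R]_k) : norm2 v ^+ 2 = \sum_i v i 0 ^+ 2.
Proof. rewrite /norm2 sqr_sqrtr //; apply: sumr_ge0 => i _; exact: sqr_ge0. Qed.

Lemma norm1_ge0 (R : realType) k (v : 'cV[R]_k) : 0 <= norm1 v.
Proof. by apply: sumr_ge0 => i _. Qed.

Lemma sq_part (R : realType) m (a b d : 'cV[R]_m) : a = b + d ->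
  norm2 a ^+ 2 <= 2 * norm2 b ^+ 2 + 2 * norm2 d ^+ 2.
Proof.
move=> ->; rewrite !norm2_sq !mulr_sumr -big_split /=.
apply: ler_sum => i _; rewrite !mxE.
have := sqr_ge0 (b i 0 - d i 0); rewrite !expr2; nra.
Qed.

Lemma l1_part (R : realType) n (w1 w2 A : 'cV[R]_n) :
  norm1 (hadamard w1 A) <= norm1 (hadamard w2 A) + norm1 (w1 - w2) * norm1 A.
Proof.
rewrite /norm1 mulr_suml -big_split /=.
apply: ler_sum => i _; rewrite !mxE.
have h1 : `|w1 i 0 * A i 0| <= `|w2 i 0 * A i 0| + `|w1 i 0 - w2 i 0| * `|A i 0|.
  rewrite -normrM.
  have -> : w1 i 0 * A i 0 = w2 i 0 * A i 0 + (w1 i 0 - w2 i 0) * A i 0 by ring.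
  exact: ler_normD.
apply: (le_trans h1); rewrite lerD2l.
apply: ler_wpM2l => //.
by rewrite (bigD1 i) //= lerDl; apply: sumr_ge0.
Qed.

Lemma fin_ineq (R : realType) (l A B N M P Q S : R) : 0 < l -> 0 <= B ->
  A <= B + N * M -> P <= 2 * Q + 2 * S ->
  P + l * A <= 2 * (Q + l * B) + 2 * S + l * N * M.
Proof.
move=> hl hB hA hP.
have h1 : l * A <= l * B + l * N * M by rewrite -mulrA -mulrDr; apply: ler_wpM2l => //; exact: ltW.
have h2 : 0 <= l * B by apply: mulr_ge0 => //; exact: ltW.
move: h1 h2 hP; move: (l * A) (l * B) (l * N * M) => a b c; lra.
Qed.

Theorem lemma7 (R : realType) (m n : nat) (K : 'M[R]_(m, n)) (Dh Dv : 'M[R]_n)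
  (lambda eta p : R) (Hlambda : 0 < lambda) (Heta : 0 < eta) (Hp0 : 0 < p) (Hp1 : p < 1)
  (Psi : 'cV[R]_m -> 'cV[R]_n) (HPsi : Lipschitz2 Psi)
  (xGT : 'cV[R]_n) (HxGT : nonneg xGT)
  (delta1 delta2 : R) (Hd1 : 0 <= delta1) (Hd2 : 0 <= delta2)
  (e1 e2 : 'cV[R]_m) (He1 : norm2 e1 <= delta1) (He2 : norm2 e2 <= delta2)
  (y1 y2 : 'cV[R]_m) (Hy1 : y1 = K *m xGT + e1) (Hy2 : y2 = K *m xGT + e2)
  (x : 'cV[R]_n) (Hx : nonneg x) :
  Jfun K Dh Dv lambda eta p Psi y1 x
  <= 2 * Jfun K Dh Dv lambda eta p Psi y2 x
     + 2 * norm2 (y1 - y2) ^+ 2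
     + lambda * norm1 (weight Dh Dv eta p (Psi y1) - weight Dh Dv eta p (Psi y2))
              * norm1 (absD Dh Dv x).
Proof.
rewrite /Jfun.
have hs : norm2 (K *m x - y1) ^+ 2 <= 2 * norm2 (K *m x - y2) ^+ 2 + 2 * norm2 (y2 - y1) ^+ 2.
  apply: sq_part; rewrite addrA subrK //.
have e : norm2 (y2 - y1) = norm2 (y1 - y2).
  by rewrite /norm2; congr Num.sqrt; apply: eq_bigr => i _; rewrite !mxE; ring.
rewrite e in hs.
have hl := @l1_part R n (weight Dh Dv eta p (Psi y1)) (weight Dh Dv eta p (Psi y2)) (absD Dh Dv x).
have h0 := @norm1_ge0 R n (hadamard (weight Dh Dv eta p (Psi y2)) (absD Dh Dv x)).
have H := @fin_ineq R lambda _ _ _ _ _ _ _ Hlambda h0 hl hs.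
exact H.
Qed.
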